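(* Let $\gamma\in(0,+\infty)\setminus\mathbb N$, $f\in C^\infty(\mathbb S^n)$ and $m\in\mathbb N$. Then $B^{2\gamma}_{2j}(\rho^{2j}f)=f$ and $B^{2\gamma}_{2j}(\rho^{2j+2m}f)=0$ for $0\le j\le\lfloor\gamma/2\rfloor$, and $B^{2\gamma}_{2j+2[\gamma]}(\rho^{2j+2[\gamma]}f)=f$ and $B^{2\gamma}_{2j+2[\gamma]}(\rho^{2j+2[\gamma]+2m}f)=0$ for $0\le j\le\lfloor\gamma\rfloor-\lfloor\gamma/2\rfloor-1$.
   Context: $n\ge1$, $\mathbb B^{n+1}$ the unit ball in $\mathbb R^{n+1}$, $x=r\theta$, functions on $\mathbb S^n$ extended by $f(r\theta)=f(\theta)$; $\mathbb N=\{1,2,\dots\}$. $g_{\mathbb B}=\frac{4|dx|^2}{(1-|x|^2)^2}$, $\Delta_+$ its Laplace–Beltrami operator, $\rho=\frac{2(1-r)}{1+r}$. $\lfloor\gamma\rfloor$ integer part, $[\gamma]=\gamma-\lfloor\gamma\rfloor$, $s=\frac n2+\gamma$, $D_t=-\Delta_+-t(n-t)$. Boundary operators (small indices): $B^{2\gamma}_0(U)=U|_{\rho=0}$; for $1\le j\le\lfloor\gamma/2\rfloor$, $B^{2\gamma}_{2j}(U)=\frac1{b_{2j}}\rho^{-\frac n2+\gamma-2j}\prod_{l=0}^{j-1}D_{s-2l}\prod_{l=\lfloor\gamma\rfloor-j+1}^{\lfloor\gamma\rfloor}D_{s-2l}(\rho^{\frac n2-\gamma}U)|_{\rho=0}$;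 for $0\le j\le\lfloor\gamma\rfloor-\lfloor\gamma/2\rfloor-1$, $B^{2\gamma}_{2j+2[\gamma]}(U)=\frac{-1}{b_{2j+2[\gamma]}}\rho^{-\frac n2+\gamma-2j-2[\gamma]}\prod_{l=0}^{j}D_{s-2l}\prod_{l=\lfloor\gamma\rfloor-j+1}^{\lfloor\gamma\rfloor}D_{s-2l}(\rho^{\frac n2-\gamma}U)|_{\rho=0}$, where the nonzero constants $b_{2j},b_{2j+2[\gamma]}$ are chosen so that $B^{2\gamma}_{2j}(\rho^{2j})=1$ and $B^{2\gamma}_{2j+2[\gamma]}(\rho^{2j+2[\gamma]})=1$. *)

(* Defs.v *)
From HB Require Import structures.
From mathcomp Require Import all_boot all_order all_algebra.
From mathcomp Require Import all_classical all_reals all_analysis.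
Set Implicit Arguments. Unset Strict Implicit. Unset Printing Implicit Defensive.
Import Order.TTheory GRing.Theory Num.Theory.
Import numFieldNormedType.Exports.
Local Open Scope classical_set_scope.
Local Open Scope ring_scope.

Section Defs.
Variables (R : realType) (n : nat).
Local Notation vec := 'rV[R]_(n.+1).

Definition enorm (x : vec) : R := Num.sqrt (\sum_i x ord0 i ^+ 2).
Definition on_sphere (th : vec) : Prop := enorm th = 1.
Definition ebasis (i : 'I_n.+1) : vec := delta_mx ord0 i.
Definition pd (i : 'I_n.+1) (F : vec -> R) : vec -> R :=
  fun x => derive F x (ebasis i).
Fixpoint dpart (s : seq 'I_n.+1) (F : vec -> R) : vec -> R :=
  match s with [::] => F | i :: s' => pd i (dpart s' F) end.
Definition smooth_on (A : set vec) (F : vec -> R) : Prop :=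
  forall (s : seq 'I_n.+1) (i : 'I_n.+1) (x : vec), A x -> derivable (dpart s F) x (ebasis i).
Definition radial (f : vec -> R) : vec -> R := fun x => f ((enorm x)^-1 *: x).
(* conformal factor phi, g_B = phi^2 |dx|^2, phi = 2/(1-|x|^2) *)
Definition cfac (x : vec) : R := 2 / (1 - enorm x ^+ 2).
(* Laplace-Beltrami operator of g_B: (1/sqrt g) d_i (sqrt g g^{ij} d_j U),
   with sqrt g = phi^{n+1}, g^{ij} = phi^{-2} delta_ij *)
Definition LB (U : vec -> R) : vec -> R :=
  fun x => (cfac x ^+ n.+1)^-1 *
           \sum_i pd i (fun y => cfac y ^+ n.-1 * pd i U y) x.
Definition Dop (t : R) (U : vec -> R) : vec -> R :=
  fun x => - LB U x - t * (n%:R - t) * U x.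
Definition Dprod (ts : seq R) (U : vec -> R) : vec -> R := foldr Dop U ts.
Definition rho (x : vec) : R := 2 * (1 - enorm x) / (1 + enorm x).
Definition flo (g : R) : nat := Num.truncn g.
Definition fracp (g : R) : R := g - (flo g)%:R.
Definition sp (g : R) : R := n%:R / 2 + g.
(* boundary value: V|_{rho=0} at theta equals l (limit r -> 1^-) *)
Definition bdry (V : vec -> R) (th : vec) (l : R) : Prop :=
  (fun r : R => V (r *: th)) @ 1^'- --> l.
(* a fixed point of the sphere, used to read off the constants b *)
Definition th0 : vec := ebasis ord0.

Definition ts_even (g : R) (j : nat) : seq R :=
  [seq sp g - 2 * l%:R | l <- iota 0 j] ++
  [seq sp g - 2 * l%:R | l <- iota (flo g - j + 1) j].
Definition ts_odd (g : R) (j : nat) : seq R :=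
  [seq sp g - 2 * l%:R | l <- iota 0 j.+1] ++
  [seq sp g - 2 * l%:R | l <- iota (flo g - j + 1) j].
Definition Beven_un (g : R) (j : nat) (U : vec -> R) : vec -> R :=
  fun x => rho x `^ (- (n%:R / 2) + g - 2 * j%:R) *
           Dprod (ts_even g j) (fun y => rho y `^ (n%:R / 2 - g) * U y) x.
Definition Bodd_un (g : R) (j : nat) (U : vec -> R) : vec -> R :=
  fun x => rho x `^ (- (n%:R / 2) + g - 2 * j%:R - 2 * fracp g) *
           Dprod (ts_odd g j) (fun y => rho y `^ (n%:R / 2 - g) * U y) x.
(* constants b: chosen so that B_{2j}(rho^{2j}) = 1, B_{2j+2[g]}(rho^{2j+2[g]}) = 1 *)
Definition b_even (g : R) (j : nat) : R :=
  lim ((fun r : R => Beven_un g j (fun y => rho y `^ (2 * j%:R)) (r *: th0)) @ 1^'-).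
Definition b_odd (g : R) (j : nat) : R :=
  - lim ((fun r : R => Bodd_un g j (fun y => rho y `^ (2 * j%:R + 2 * fracp g)) (r *: th0)) @ 1^'-).
(* the operators before taking rho = 0; B(U)(theta) = l  iff  bdry (Bexpr U) theta l *)
Definition Beven (g : R) (j : nat) (U : vec -> R) : vec -> R :=
  if j == 0%N then U else fun x => (b_even g j)^-1 * Beven_un g j U x.
Definition Bodd (g : R) (j : nat) (U : vec -> R) : vec -> R :=
  fun x => - (b_odd g j)^-1 * Bodd_un g j U x.
End Defs.

(* Main.v *)
Require Import Defs.
From HB Require Import structures.
From mathcomp Require Import all_boot all_order all_algebra.
From mathcomp Require Import all_classical all_reals all_analysis.
From mathcomp Require Import ring lra zify.
Import Order.TTheory GRing.Theory Num.Theory.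
Local Open Scope classical_set_scope.
Local Open Scope ring_scope.
Import numFieldNormedType.Exports.
Set Implicit Arguments. Unset Strict Implicit. Unset Printing Implicit Defensive.
Section S1.
Variables (R : realType) (k : nat).
Local Notation vec := 'rV[R]_(k.+2).

Definition Om (x : vec) : Prop := 0 < enorm x < 1.

Lemma enorm_ge0 (x : vec) : 0 <= enorm x.
Proof. exact: sqrtr_ge0. Qed.

Lemma enorm_sq (x : vec) : enorm x ^+ 2 = \sum_i x ord0 i ^+ 2.
Proof. by rewrite /enorm sqr_sqrtr // sumr_ge0 // => i _; rewrite sqr_ge0. Qed.

Lemma enormZ (c : R) (x : vec) : enorm (c *: x) = `|c| * enorm x.
Proof.
rewrite /enorm (eq_bigr (fun i => c ^+ 2 * x ord0 i ^+ 2)); last first.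
  by move=> i _; rewrite mxE exprMn.
rewrite -mulr_sumr sqrtrM ?sqr_ge0 // sqrtr_sqr //.
Qed.

Lemma Ssum_cont (x : vec) (r : seq 'I_(k.+2)) :
  {for x, continuous (fun y : vec => \sum_(i <- r) y ord0 i ^+ 2)}.
Proof.
elim: r => [|i r IH].
  have -> : (fun y : vec => \sum_(i <- [::]) y ord0 i ^+ 2) = cst 0.
    by apply/funext => y; rewrite big_nil.
  exact: cst_continuous.
have -> : (fun y : vec => \sum_(j <- i :: r) y ord0 j ^+ 2) =
   (fun y : vec => y ord0 i * y ord0 i) + (fun y : vec => \sum_(j <- r) y ord0 j ^+ 2).
  by apply/funext => y; rewrite big_cons expr2.
apply: continuousD => //.
by apply: continuousM; apply: coord_continuous.
Qed.

Lemma enorm_cont (x : vec) : {for x, continuous (@enorm R k.+1)}.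
Proof.
apply: (@continuous_comp _ _ _ (fun y : vec => \sum_i y ord0 i ^+ 2) Num.sqrt).
  exact: Ssum_cont.
exact: sqrt_continuous.
Qed.

Lemma Om_near (x : vec) : Om x -> \forall y \near x, Om y.
Proof.
move=> /andP[h0 h1].
have c := enorm_cont (x:=x).
have g0 := cvgr_gt _ c _ h0.
have g1 := cvgr_lt _ c _ h1.
by near=> y; apply/andP; split; [near: y; exact: g0|near: y; exact: g1].
Unshelve. all: by end_near. Qed.

Lemma loc_der (F G : vec -> R) (x v : vec) :
  (forall y, Om y -> F y = G y) -> Om x -> 'D_v F x = 'D_v G x.
Proof.
move=> FG Ox; apply: near_eq_derive; near=> y; apply: FG; near: y.
exact: Om_near.
Unshelve. all: by end_near. Qed.

Lemma loc_derivable (F G : vec -> R) (x v : vec) :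
  (forall y, Om y -> F y = G y) -> Om x -> derivable F x v -> derivable G x v.
Proof.
move=> FG Ox; apply: near_eq_derivable; near=> y; apply: FG; near: y.
exact: Om_near.
Unshelve. all: by end_near. Qed.

End S1.
Section S2.
Variables (R : realType) (k : nat).
Local Notation vec := 'rV[R]_(k.+2).

Lemma derive_line (F : vec -> R) (x v : vec) :
  'D_v F x = 'D_1 (fun h : R => F (h *: v + x)) 0.
Proof.
rewrite /derive; set g1 := fun h => h^-1 *: _; set g2 := fun h => h^-1 *: _.
suff -> : g1 = g2 by [].
by rewrite funeqE /g1 /g2 => h /=; rewrite addr0 scale0r add0r [_%:A]mulr1.
Qed.

Lemma is_derive_line (F : vec -> R) (x v : vec) (d : R) :
  is_derive (0:R) 1 (fun h : R => F (h *: v + x)) d -> is_derive x v F d.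
Proof.
case=> H1 H2; split; first exact/derivable1P.
by rewrite derive_line.
Qed.

Lemma chain (S : vec -> R) (g : R -> R) (x v : vec) (dg : R) :
  derivable S x v -> is_derive (S x) 1 g dg ->
  is_derive x v (fun y => g (S y)) (dg * 'D_v S x).
Proof.
move=> dS [dg1 dgv].
have dL : derivable (fun h : R => S (h *: v + x)) 0 1 by move/derivable1P: dS.
have eL : S (0 *: v + x) = S x by rewrite scale0r add0r.
apply: is_derive_line; split.
  apply/derivable1_diffP.
  apply: (@differentiable_comp _ _ _ _ (fun h : R => S (h *: v + x)) g).
    exact/derivable1_diffP.
  by rewrite /= eL; apply/derivable1_diffP.
rewrite -derive1E.
rewrite (@derive1_comp _ (fun h : R => S (h *: v + x)) g) //; last by rewrite eL.
by rewrite eL !derive1E dgv -derive_line.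
Qed.

Lemma quot_cvg (F : vec -> R) (x v : vec) (c : R) :
  (forall h : R, h != 0 -> h^-1 * (F (h *: v + x) - F x) = c) ->
  (fun h : R => h^-1 *: ((F \o shift x) (h *: v) - F x)) @ 0^' --> c.
Proof.
move=> H.
apply: (cvg_trans _ (cvg_cst c)).
apply: near_eq_cvg; near=> h.
have hn : h != 0 by near: h; exact: nbhs_dnbhs_neq.
by rewrite /= -[h^-1 *: _]/(h^-1 * _) H.
Unshelve. all: try by end_near. exact: dnbhs_filter. Qed.

Lemma quot_derive (F : vec -> R) (x v : vec) (c : R) :
  (forall h : R, h != 0 -> h^-1 * (F (h *: v + x) - F x) = c) ->
  is_derive x v F c.
Proof.
move=> H; have E := quot_cvg H.
split; first exact: cvgP E.
exact: cvg_lim E.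
Qed.

Lemma isd_coord (x v : vec) (j : 'I_(k.+2)) :
  is_derive x v (fun y : vec => y ord0 j) (v ord0 j).
Proof.
apply: quot_derive => h hn.
by rewrite !mxE addrK mulKf.
Qed.

Lemma isdM (F G : vec -> R) (x v : vec) (dF dG : R) :
  is_derive x v F dF -> is_derive x v G dG ->
  is_derive x v (fun y => F y * G y) (F x * dG + G x * dF).
Proof. move=> H1 H2. exact: (is_deriveM H1 H2). Qed.

Lemma isdD (F G : vec -> R) (x v : vec) (dF dG : R) :
  is_derive x v F dF -> is_derive x v G dG ->
  is_derive x v (fun y => F y + G y) (dF + dG).
Proof. move=> H1 H2. exact: (is_deriveD H1 H2). Qed.

Lemma isdC (x v : vec) (c : R) : is_derive x v (fun _ : vec => c) 0.
Proof. exact: is_derive_cst. Qed.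

Lemma isdV (F : vec -> R) (x v : vec) (dF : R) :
  F x != 0 -> is_derive x v F dF ->
  is_derive x v (fun y => (F y)^-1) (- (F x) ^- 2 * dF).
Proof.
move=> Fx [H1 H2]; split; first exact: derivableV.
by rewrite deriveV // H2.
Qed.

Lemma isd_sum (H : 'I_(k.+2) -> vec -> R) (dH : 'I_(k.+2) -> R) (x v : vec) :
  (forall i, is_derive x v (H i) (dH i)) ->
  is_derive x v (fun y => \sum_i H i y) (\sum_i dH i).
Proof.
move=> Hd.
have := is_derive_sum Hd.
by rewrite (_ : \sum_(i < k.+2) H i = (fun y => \sum_i H i y)) //; apply/funext => y; rewrite fct_sumE.
Qed.

End S2.
Section S3gen.
Variables (R : realType) (V : normedModType R).

Lemma quot_cvgG (F : V -> R) (x v : V) (c : R) :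
  (forall h : R, h != 0 -> h^-1 * (F (h *: v + x) - F x) = c) ->
  (fun h : R => h^-1 *: ((F \o shift x) (h *: v) - F x)) @ 0^' --> c.
Proof.
move=> H.
apply: (cvg_trans _ (cvg_cst c)).
apply: near_eq_cvg; near=> h.
have hn : h != 0 by near: h; exact: nbhs_dnbhs_neq.
by rewrite /= -[h^-1 *: _]/(h^-1 * _) H.
Unshelve. all: try by end_near. exact: dnbhs_filter. Qed.

Lemma quot_deriveG (F : V -> R) (x v : V) (c : R) :
  (forall h : R, h != 0 -> h^-1 * (F (h *: v + x) - F x) = c) ->
  is_derive x v F c.
Proof.
move=> H; have E := quot_cvgG H.
split; first exact: cvgP E.
exact: cvg_lim E.
Qed.

Lemma derive_lineG (F : V -> R) (x v : V) :
  'D_v F x = 'D_1 (fun h : R => F (h *: v + x)) 0.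
Proof.
rewrite /derive; set g1 := fun h => h^-1 *: _; set g2 := fun h => h^-1 *: _.
suff -> : g1 = g2 by [].
by rewrite funeqE /g1 /g2 => h /=; rewrite addr0 scale0r add0r [_%:A]mulr1.
Qed.

End S3gen.

Section S3gen2.
Variables (R : realType) (V : normedModType R).

Lemma isd_scale (D : V -> R) (c : R) (a v : V) (d : R) :
  is_derive (c *: a) v D d -> is_derive a v (fun z => D (c *: z)) (c * d).
Proof.
case=> H1 H2.
have dL : derivable (fun h : R => D (h *: v + c *: a)) 0 1 by move/derivable1P: H1.
have dm : is_derive (0:R) 1 (fun h : R => c * h) c.
  apply: quot_deriveG => h hn; rewrite mulr0 subr0 /=. by rewrite addr0 [h%:A]mulr1 mulrCA mulVf // mulr1.
have e0 : c * 0 = 0 by rewrite mulr0.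
have eq : (fun h : R => D (c *: (h *: v + a))) =
          (fun h : R => D (h *: v + c *: a)) \o (fun h : R => c * h).
  by apply/funext => h /=; rewrite scalerDr scalerA.
split.
  apply/derivable1P; rewrite eq.
  apply/derivable1_diffP; apply: differentiable_comp.
    by apply/derivable1_diffP; case: dm.
  by rewrite /= e0; apply/derivable1_diffP.
rewrite derive_lineG eq -derive1E derive1_comp; last 2 first.
- by case: dm.
- by rewrite e0.
rewrite e0 !derive1E -derive_lineG H2.
by case: dm => _ ->; rewrite mulrC.
Qed.
End S3gen2.

Section S3.
Variables (R : realType) (k : nat).
Local Notation vec := 'rV[R]_(k.+2).

Lemma enorm_eq0 (x : vec) : enorm x = 0 -> x = 0.
Proof.
move=> /eqP; rewrite /enorm sqrtr_eq0 => H.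
have H0 : \sum_i x ord0 i ^+ 2 = 0.
  by apply/eqP; rewrite eq_le H sumr_ge0 // => i _; rewrite sqr_ge0.
move/psumr_eq0P: H0 => H1.
apply/rowP => j; rewrite mxE; apply/eqP; rewrite -sqrf_eq0; apply/eqP.
by apply: H1 => // i _; rewrite sqr_ge0.
Qed.

Lemma enorm_gt0 (x : vec) : x != 0 -> 0 < enorm x.
Proof.
move=> xn; rewrite lt_def enorm_ge0 andbT; apply/eqP => /enorm_eq0 H.
by rewrite H eqxx in xn.
Qed.

Lemma enorm0 : enorm (0 : vec) = 0.
Proof.
rewrite /enorm big1 ?sqrtr0 // => i _; by rewrite mxE expr0n.
Qed.

Lemma near_neq0 (a : vec) : a != 0 -> \forall z \near a, z != 0.
Proof.
move=> an.
have c := enorm_cont (x:=a).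
have g0 := cvgr_gt _ c _ (enorm_gt0 an).
near=> z; apply/eqP => z0.
have : 0 < enorm z by near: z; exact: g0.
by rewrite z0 enorm0 ltxx.
Unshelve. all: by end_near. Qed.

Lemma isd_S (x v : vec) :
  is_derive x v (fun y : vec => \sum_i y ord0 i ^+ 2)
     (\sum_i 2 * x ord0 i * v ord0 i).
Proof.
apply: isd_sum => i.
have H := isdM (isd_coord x v i) (isd_coord x v i).
rewrite (_ : (fun y : vec => y ord0 i ^+ 2) = (fun y => y ord0 i * y ord0 i)); last first.
  by apply/funext => y; rewrite expr2.
apply: (is_derive_eq H); rewrite mulr2n; ring.
Qed.

Lemma ebasisE (i j : 'I_(k.+2)) : ebasis R i ord0 j = (j == i)%:R.
Proof. by rewrite /ebasis mxE eqxx. Qed.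

Lemma sum_delta (c : 'I_(k.+2) -> R) (i : 'I_(k.+2)) :
  \sum_j c j * (j == i)%:R = c i.
Proof.
rewrite (bigD1 i) //= eqxx mulr1 big1 ?addr0 // => j /negbTE ->.
by rewrite mulr0.
Qed.

Lemma isd_enorm (x : vec) (i : 'I_(k.+2)) :
  0 < enorm x -> is_derive x (ebasis R i) (@enorm R k.+1) (x ord0 i / enorm x).
Proof.
move=> r0.
have S0 : 0 < \sum_j x ord0 j ^+ 2 by rewrite -enorm_sq exprn_gt0.
have dS := isd_S x (ebasis R i).
have H := chain (ex_derive (is_derive:=dS)) (is_derive1_sqrt S0).
apply: (is_derive_eq H).
rewrite (derive_val (is_derive:=dS)).
have e : \sum_i0 2 * x ord0 i0 * ebasis R i ord0 i0 = 2 * x ord0 i.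
  rewrite (eq_bigr (fun j => (2 * x ord0 j) * (j == i)%:R)) ?sum_delta //.
  by move=> j _; rewrite ebasisE.
rewrite e -/(enorm x).
field.
by rewrite gt_eqF.
Qed.

End S3.
Section S4.
Variables (R : realType) (k : nat).
Local Notation vec := 'rV[R]_(k.+2).
Variable F : vec -> R.
Variable hF : smooth_on (fun x : vec => x <> 0) F.
Variable hom : forall (c : R) (y : vec), 0 < c -> F (c *: y) = F y.

Lemma dpart_hom (s : seq 'I_(k.+2)) : forall (y : vec) (c : R), y != 0 -> 0 < c ->
  dpart s F (c *: y) = (c ^+ size s)^-1 * dpart s F y.
Proof.
elim: s => [|i s IH] y c yn cp /=.
  by rewrite hom // expr0 invr1 mul1r.
have cn : c != 0 by rewrite gt_eqF.
have cyn : c *: y != 0 by rewrite scaler_eq0 negb_or cn.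
have nr : \forall z \near c *: y, (fun z => (c ^+ size s)^-1 * dpart s F (c^-1 *: z)) z = dpart s F z.
  near=> z.
  have zn : z != 0 by near: z; exact: near_neq0.
  rewrite -[in RHS](_ : c *: (c^-1 *: z) = z); last by rewrite scalerA mulfV // scale1r.
  rewrite [in RHS]IH //.
  by rewrite scaler_eq0 negb_or zn andbT invr_eq0.
rewrite /pd -(near_eq_derive _ nr).
have yn' : y <> 0 by move=> y0; rewrite y0 eqxx in yn.
have dy := derivableP (@hF s i y yn').
have dy' : is_derive (c^-1 *: (c *: y)) (ebasis R i) (dpart s F) ('D_(ebasis R i) (dpart s F) y).
  by rewrite scalerA mulVf // scale1r.
have H := isdM (isdC (c *: y) (ebasis R i) ((c ^+ size s)^-1)) (isd_scale dy').
rewrite (derive_val (is_derive:=H)) exprS invfM.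
rewrite -/(pd i (dpart s F) y). ring.
Unshelve. all: by end_near. Qed.

Inductive GI : (vec -> R) -> Prop :=
| GIc (c : R) : GI (fun _ => c)
| GIx (j : 'I_(k.+2)) : GI (fun y => y ord0 j)
| GIr : GI (@enorm R k.+1)
| GIri : GI (fun y => (enorm y)^-1)
| GIpi : GI (fun y => (1 + enorm y)^-1)
| GIF (s : seq 'I_(k.+2)) : GI (dpart s F)
| GIadd (A B : vec -> R) : GI A -> GI B -> GI (fun y => A y + B y)
| GImul (A B : vec -> R) : GI A -> GI B -> GI (fun y => A y * B y).

Lemma Om_pos (x : vec) : Om x -> 0 < enorm x.
Proof. by case/andP. Qed.

Lemma Om_neq0 (x : vec) : Om x -> x <> 0.
Proof. by move=> /Om_pos; rewrite lt_def => /andP[h _] x0; rewrite x0 enorm0 eqxx in h. Qed.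

Lemma GI_der (A : vec -> R) : GI A -> forall i : 'I_(k.+2),
  exists A', GI A' /\ forall x, Om x -> is_derive x (ebasis R i) A (A' x).
Proof.
elim => [c|j||||s|A1 B1 _ IA _ IB|A1 B1 GA IA GB IB] i.
- exists (fun _ : vec => 0); split; first exact: GIc.
  by move=> x _; exact: isdC.
- exists (fun _ : vec => ebasis R i ord0 j); split; first exact: GIc.
  by move=> x _; exact: isd_coord.
- exists (fun y : vec => y ord0 i * (enorm y)^-1); split; first exact: (GImul (GIx i) GIri).
  by move=> x /Om_pos Ox; exact: isd_enorm.
- exists (fun y : vec => (-1) * (((enorm y)^-1 * (enorm y)^-1) * (y ord0 i * (enorm y)^-1))).
  split; first exact: (GImul (GIc _) (GImul (GImul GIri GIri) (GImul (GIx i) GIri))).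
  move=> x /Om_pos Ox.
  have H := isdV (lt0r_neq0 Ox) (isd_enorm i Ox).
  apply: (is_derive_eq H).
  field; by rewrite gt_eqF.
- exists (fun y : vec => (-1) * (((1 + enorm y)^-1 * (1 + enorm y)^-1) * (y ord0 i * (enorm y)^-1))).
  split; first exact: (GImul (GIc _) (GImul (GImul GIpi GIpi) (GImul (GIx i) GIri))).
  move=> x /Om_pos Ox.
  have p1 : 0 < 1 + enorm x by rewrite addr_gt0.
  have H := isdV (lt0r_neq0 p1) (isdD (isdC x (ebasis R i) 1) (isd_enorm i Ox)).
  apply: (is_derive_eq H).
  field; by rewrite !gt_eqF.
- exists (dpart (i :: s) F); split; first exact: GIF.
  move=> x /Om_neq0 xn.
  exact: (DeriveDef (@hF s i x xn) erefl).
- have [A' [GA' dA]] := IA i.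
  have [B' [GB' dB]] := IB i.
  exists (fun y : vec => A' y + B' y); split; first exact: GIadd.
  by move=> x Ox; exact: (isdD (dA x Ox) (dB x Ox)).
- have [A' [GA' dA]] := IA i.
  have [B' [GB' dB]] := IB i.
  exists (fun y : vec => A1 y * B' y + B1 y * A' y); split.
    exact: (GIadd (GImul GA GB') (GImul GB GA')).
  by move=> x Ox; exact: (isdM (dA x Ox) (dB x Ox)).
Qed.

Definition Gp (E : vec -> R) : Prop :=
  exists E0, GI E0 /\ forall x, Om x -> E x = E0 x.

Lemma Gp_der (E : vec -> R) (i : 'I_(k.+2)) : Gp E ->
  (forall x, Om x -> is_derive x (ebasis R i) E (pd i E x)) /\ Gp (pd i E).
Proof.
case=> E0 [G0 eq].
have [A' [GA dA]] := GI_der G0 i.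
have dE : forall x, Om x -> is_derive x (ebasis R i) E (A' x).
  move=> x Ox; apply: (near_eq_is_derive _ (dA x Ox)).
  near=> y; rewrite eq //; near: y; exact: Om_near.
split.
  by move=> x Ox; have [d1 d2] := dE x Ox; split; rewrite // /pd d2.
exists A'; split => // x Ox; have [_ d2] := dE x Ox; exact: d2.
Unshelve. all: by end_near. Qed.

Lemma Gp_GI (A : vec -> R) : GI A -> Gp A.
Proof. by move=> G; exists A. Qed.

Lemma Gp_ext (A B : vec -> R) : (forall x, Om x -> A x = B x) -> Gp A -> Gp B.
Proof. by move=> AB [E0 [G0 e]]; exists E0; split => // x Ox; rewrite -AB // e. Qed.

Lemma Gp_add (A B : vec -> R) : Gp A -> Gp B -> Gp (fun y => A y + B y).
Proof.
move=> [A0 [GA eA]] [B0 [GB eB]]; exists (fun y => A0 y + B0 y); split.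
  exact: GIadd.
by move=> x Ox; rewrite eA // eB.
Qed.

Lemma Gp_mul (A B : vec -> R) : Gp A -> Gp B -> Gp (fun y => A y * B y).
Proof.
move=> [A0 [GA eA]] [B0 [GB eB]]; exists (fun y => A0 y * B0 y); split.
  exact: GImul.
by move=> x Ox; rewrite eA // eB.
Qed.

Lemma Gp_c (c : R) : Gp (fun _ => c).
Proof. exact/Gp_GI/GIc. Qed.

Lemma Gp_sum (H : 'I_(k.+2) -> vec -> R) :
  (forall i, Gp (H i)) -> Gp (fun y => \sum_i H i y).
Proof.
move=> HG.
suff : forall r : seq 'I_(k.+2), Gp (fun y => \sum_(i <- r) H i y).
  by move/(_ (index_enum _)).
elim => [|i r IH].
  by apply: (Gp_ext _ (Gp_c 0)) => x _; rewrite big_nil.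
apply: (Gp_ext _ (Gp_add (HG i) IH)) => x _; by rewrite big_cons.
Qed.

Lemma Gp_pd (E : vec -> R) (i : 'I_(k.+2)) : Gp E -> Gp (pd i E).
Proof. by move=> G; case: (Gp_der i G). Qed.

Lemma Gp_exp (E : vec -> R) (m : nat) : Gp E -> Gp (fun y => E y ^+ m).
Proof.
move=> G; elim: m => [|m IH].
  by apply: (Gp_ext _ (Gp_c 1)) => x _; rewrite expr0.
by apply: (Gp_ext _ (Gp_mul G IH)) => x _; rewrite exprS.
Qed.

Lemma near_left_pos : \forall r \near (1:R)^'-, 0 < r.
Proof. exact: nbhs_left_gt. Qed.

Lemma ray_r (th : vec) : on_sphere th ->
  (fun r : R => enorm (r *: th)) @ (1:R)^'- --> (1:R).
Proof.
move=> sth.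
apply: (cvg_trans (near_eq_cvg _)); last first.
  apply: cvg_at_left_filter; exact: cvg_id.
near=> r.
have rp : 0 < r by near: r; exact: near_left_pos.
by rewrite /= enormZ sth mulr1 gtr0_norm.
Unshelve. all: by end_near. Qed.

Lemma GI_ray (A : vec -> R) : GI A -> forall th : vec, on_sphere th ->
  exists l : R, (fun r : R => A (r *: th)) @ (1:R)^'- --> l.
Proof.
move=> GA th sth.
have thn : th != 0.
  by apply/eqP => t0; move: sth; rewrite /on_sphere t0 enorm0 => /eqP; rewrite eq_sym oner_eq0.
elim: GA => [c|j||||s|A1 B1 _ [la IA] _ [lb IB]|A1 B1 _ [la IA] _ [lb IB]].
- by exists c; exact: cvg_cst.
- exists (1 * th ord0 j).
  have -> : (fun r : R => (r *: th) ord0 j) = (fun r => r * th ord0 j).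
    by apply/funext => r; rewrite mxE.
  apply: cvg_at_left_filter.
  exact: (cvgM cvg_id (cvg_cst _)).
- by exists 1; exact: ray_r.
- exists (1^-1); exact: (cvgV (oner_neq0 _) (ray_r sth)).
- exists ((1 + 1)^-1).
  have h2 : (1 + 1 : R) != 0 by rewrite gt_eqF // addr_gt0.
  have H1 : (fun r : R => (1:R) + enorm (r *: th)) @ (1:R)^'- --> (1 + 1 : R).
    exact: (cvgD (cvg_cst (1:R)) (ray_r sth)).
  exact: (cvgV h2 H1).
- exists ((1 ^+ size s)^-1 * dpart s F th).
  apply: (cvg_trans (near_eq_cvg _)); last first.
    apply: cvgM; last exact: cvg_cst.
    apply: cvgV; first by rewrite expr1n oner_neq0.
    apply: cvg_at_left_filter.
    exact: exprn_continuous.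
  near=> r.
  have rp : 0 < r by near: r; exact: near_left_pos.
  by rewrite /= dpart_hom.
- by exists (la + lb); exact: (cvgD IA IB).
- by exists (la * lb); exact: (cvgM IA IB).
Unshelve. all: by end_near. Qed.

Lemma Gp_ray (E : vec -> R) : Gp E -> forall th : vec, on_sphere th ->
  exists l : R, (fun r : R => E (r *: th)) @ (1:R)^'- --> l.
Proof.
move=> [E0 [G0 e]] th sth.
have [l Hl] := GI_ray G0 sth.
exists l; apply: (cvg_trans (near_eq_cvg _) Hl).
near=> r.
have rp : 0 < r by near: r; exact: near_left_pos.
have r1 : r < 1 by near: r; exact: nbhs_left_lt.
rewrite /= e //.
by apply/andP; split; rewrite enormZ sth mulr1 gtr0_norm.
Unshelve. all: by end_near. Qed.


Definition ip (y : vec) : R := (1 + enorm y)^-1.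
Definition Pd (i : 'I_(k.+2)) (y : vec) : R :=
  -4 * y ord0 i * (enorm y)^-1 * ip y ^+ 2.

Lemma Om_rho (x : vec) : Om x -> 0 < rho x.
Proof.
case/andP => h0 h1; rewrite /rho divr_gt0 // ?mulr_gt0 ?subr_gt0 //.
by rewrite addr_gt0.
Qed.

Lemma Om_ip (x : vec) : Om x -> 1 + enorm x != 0.
Proof. by case/andP => h0 h1; rewrite gt_eqF // addr_gt0. Qed.

Lemma Gp_ip : Gp ip.
Proof. exact/Gp_GI/GIpi. Qed.

Lemma Gp_r : Gp (@enorm R k.+1).
Proof. exact/Gp_GI/GIr. Qed.

Lemma Gp_rho : Gp (@rho R k.+1).
Proof.
have G : Gp (fun y : vec => (2 * (1 + (-1) * enorm y)) * ip y).
  apply: Gp_mul; last exact: Gp_ip.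
  apply: Gp_mul; first exact: Gp_c.
  apply: Gp_add; first exact: Gp_c.
  apply: Gp_mul; [exact: Gp_c| exact: Gp_r].
apply: (Gp_ext _ G) => x _; rewrite /rho /ip; ring.
Qed.

Lemma Gp_Pd (i : 'I_(k.+2)) : Gp (Pd i).
Proof.
apply: Gp_mul; last exact: Gp_exp Gp_ip.
apply: Gp_mul; last exact/Gp_GI/GIri.
apply: Gp_mul; [exact: Gp_c | exact/Gp_GI/GIx].
Qed.

Lemma isd_rho (x : vec) (i : 'I_(k.+2)) : Om x ->
  is_derive x (ebasis R i) (@rho R k.+1) (Pd i x).
Proof.
move=> Ox.
have r0 := Om_pos Ox.
have H := isdM (isdM (isdC x (ebasis R i) 2)
                     (isdD (isdC x (ebasis R i) 1) (isdM (isdC x (ebasis R i) (-1)) (isd_enorm i r0))))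
               (isdV (Om_ip Ox) (isdD (isdC x (ebasis R i) 1) (isd_enorm i r0))).
have -> : (@rho R k.+1) = (fun y => 2 * (1 + (-1) * enorm y) * (1 + enorm y)^-1).
  by apply/funext => y; rewrite /rho; ring.
apply: (is_derive_eq H).
rewrite /Pd /ip.
have := Om_ip Ox; have := gt_eqF r0 => h1 h2.
field.
by rewrite h1 h2.
Qed.

Lemma isd_pw (c : R) (Z : vec -> R) (x : vec) (i : 'I_(k.+2)) (dZ : R) :
  Om x -> is_derive x (ebasis R i) Z dZ ->
  is_derive x (ebasis R i) (fun y => rho y `^ c * Z y)
     (rho x `^ (c - 1) * (c * Pd i x * Z x + rho x * dZ)).
Proof.
move=> Ox dZ'.
have rp := Om_rho Ox.
have dr := isd_rho i Ox.
have H1 := chain (ex_derive (is_derive:=dr)) (is_derive1_powR c rp).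
have H := isdM H1 dZ'.
apply: (is_derive_eq H).
rewrite (derive_val (is_derive:=dr)).
have e : rho x `^ c = rho x `^ (c - 1) * rho x `^ 1.
  by rewrite -powRD ?subrK //; apply/implyP => _; rewrite gt_eqF.
rewrite e powRr1 ?ltW //; ring.
Qed.

Lemma sumPd2 (x : vec) : Om x -> \sum_i Pd i x ^+ 2 = 16 * ip x ^+ 4.
Proof.
move=> Ox; have r0 := Om_pos Ox.
rewrite (eq_bigr (fun i => (16 * (enorm x)^-2 * ip x ^+ 4) * x ord0 i ^+ 2)); last first.
  by move=> i _; rewrite /Pd; field; rewrite gt_eqF.
rewrite -mulr_sumr -enorm_sq; field; by rewrite gt_eqF.
Qed.
Definition nR : R := (k.+1)%:R.

Lemma step (b t : R) (Vf E : vec -> R) :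
  Gp E -> (forall x, Om x -> Vf x = rho x `^ b * E x) ->
  exists E2, Gp E2 /\ forall x, Om x ->
    Dop t Vf x = rho x `^ b *
      ((- (b * (b - (k.+1)%:R)) - t * ((k.+1)%:R - t)) * E x + rho x * E2 x).
Proof.
move=> GE eV.
pose Y (i : 'I_(k.+2)) (y : vec) := b * Pd i y * E y + rho y * pd i E y.
have GY : forall i, Gp (Y i).
  move=> i; apply: Gp_add.
    by apply: Gp_mul; [apply: Gp_mul; [exact: Gp_c|exact: Gp_Pd]|exact: GE].
  by apply: Gp_mul; [exact: Gp_rho|exact: Gp_pd].
have hA : forall i y, Om y -> pd i Vf y = rho y `^ (b - 1) * Y i y.
  move=> i y Oy.
  rewrite /pd (loc_der (ebasis R i) eV Oy).
  have [dE _] := Gp_der i GE.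
  have H := isd_pw b Oy (dE y Oy).
  by rewrite (derive_val (is_derive:=H)).
pose psi (y : vec) := (4 * ip y ^+ 2) ^+ k.
have Gpsi : Gp psi by apply: Gp_exp; apply: Gp_mul; [exact: Gp_c|exact: Gp_exp Gp_ip].
have hB : forall i y, Om y ->
    cfac y ^+ (k.+1).-1 * pd i Vf y = rho y `^ (b - (k.+1)%:R) * (psi y * Y i y).
  move=> i y Oy; rewrite hA //.
  have rp := Om_rho Oy.
  have e1 : rho y `^ (b - 1) = rho y `^ (b - (k.+1)%:R) * rho y ^+ k.
    rewrite -powR_mulrn ?ltW // -powRD; last by apply/implyP => _; rewrite gt_eqF.
    by congr (_ `^ _); rewrite -natr1; ring.
  have e2 : cfac y ^+ k * rho y ^+ k = psi y.
    rewrite -exprMn; congr (_ ^+ _); rewrite /cfac /rho /ip.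
    case/andP: Oy => h0 h1.
    have q1 : 1 - enorm y != 0 by rewrite gt_eqF // subr_gt0.
    have q2 : 1 + enorm y != 0 by rewrite gt_eqF // addr_gt0.
    have q3 : 1 - enorm y ^+ 2 != 0.
      by rewrite gt_eqF // subr_gt0 expr_lt1 // ltW.
    field.
    by rewrite ?q1 ?q2 ?q3.
  rewrite e1 -e2 /=; ring.
pose W (i : 'I_(k.+2)) (y : vec) := psi y * Y i y.
have GW : forall i, Gp (W i) by move=> i; apply: Gp_mul.
have hC : forall i x, Om x ->
   pd i (fun y => cfac y ^+ (k.+1).-1 * pd i Vf y) x =
   rho x `^ (b - (k.+1)%:R - 1) * ((b - (k.+1)%:R) * Pd i x * W i x + rho x * pd i (W i) x).
  move=> i x Ox.
  rewrite /pd (loc_der (ebasis R i) (hB i) Ox).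
  have [dW _] := Gp_der i (GW i).
  have H := isd_pw (b - (k.+1)%:R) Ox (dW x Ox).
  by rewrite (derive_val (is_derive:=H)).
pose theta (y : vec) := ((1 + enorm y) ^+ 2 / 4) ^+ k.+2.
have Gtheta : Gp theta.
  apply: Gp_exp; apply: Gp_mul; last exact: Gp_c.
  apply: Gp_exp; apply: Gp_add; [exact: Gp_c|exact: Gp_r].
have hD : forall x, Om x -> LB Vf x = rho x `^ b *
     (theta x * \sum_i ((b - (k.+1)%:R) * Pd i x * W i x + rho x * pd i (W i) x)).
  move=> x Ox.
  rewrite /LB (eq_bigr _ (fun i _ => hC i x Ox)) -mulr_sumr.
  have rp := Om_rho Ox.
  have e3 : rho x `^ b = rho x `^ (b - (k.+1)%:R - 1) * rho x ^+ k.+2.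
    rewrite -powR_mulrn ?ltW // -powRD; last by apply/implyP => _; rewrite gt_eqF.
    by congr (_ `^ _); rewrite -natr1 -natr1; ring.
  have e4 : (cfac x ^+ k.+2)^-1 = rho x ^+ k.+2 * theta x.
    rewrite /theta -exprMn -exprVn; congr (_ ^+ _); rewrite /cfac /rho.
    case/andP: Ox => h0 h1.
    have q1 : 1 - enorm x != 0 by rewrite gt_eqF // subr_gt0.
    have q2 : 1 + enorm x != 0 by rewrite gt_eqF // addr_gt0.
    have q3 : 1 - enorm x ^+ 2 != 0.
      by rewrite gt_eqF // subr_gt0 expr_lt1 // ltW.
    field.
    by rewrite ?q1 ?q2 ?q3.
  rewrite e3 e4; ring.
exists (fun y => - (theta y * \sum_i ((b - (k.+1)%:R) * Pd i y * psi y * pd i E y + pd i (W i) y))).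
split.
  apply: (Gp_ext _ (Gp_mul (Gp_c (-1)) _)); first by move=> y _; rewrite mulN1r.
  apply: Gp_mul => //; apply: Gp_sum => i.
  apply: Gp_add; last exact: Gp_pd.
  apply: Gp_mul; last exact: Gp_pd.
  apply: Gp_mul => //; apply: Gp_mul; [exact: Gp_c|exact: Gp_Pd].
move=> x Ox.
rewrite /Dop hD // eV //.
rewrite (eq_bigr (fun i => ((b - (k.+1)%:R) * b * psi x * E x) * Pd i x ^+ 2 +
    rho x * ((b - (k.+1)%:R) * Pd i x * psi x * pd i E x + pd i (W i) x))); last first.
  by move=> i _; rewrite /W /Y; ring.
rewrite big_split /= -mulr_sumr -mulr_sumr sumPd2 //.
have e5 : theta x * psi x * (16 * ip x ^+ 4) = 1.
  have q2 : 1 + enorm x != 0 by case/andP: Ox => h0 h1; rewrite gt_eqF // addr_gt0.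
  rewrite /theta /psi (_ : k.+2 = (2 + k)%N) // exprD.
  have UQ : ((1 + enorm x) ^+ 2 / 4) ^+ k * (4 * ip x ^+ 2) ^+ k = 1.
    rewrite -exprMn (_ : (1 + enorm x) ^+ 2 / 4 * (4 * ip x ^+ 2) = 1) ?expr1n //.
    by rewrite /ip; field; rewrite ?q2.
  transitivity (((1 + enorm x) ^+ 2 / 4) ^+ 2 * (16 * ip x ^+ 4) *
     (((1 + enorm x) ^+ 2 / 4) ^+ k * (4 * ip x ^+ 2) ^+ k)); first ring.
  by rewrite UQ mulr1 /ip; field; rewrite ?q2.
apply: subr0_eq.
transitivity (- (rho x `^ b * (b - (k.+1)%:R) * b * E x) * (theta x * psi x * (16 * ip x ^+ 4) - 1)).
  ring.
by rewrite e5 subrr mulr0.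
Qed.
Definition kap (a t : R) : R := - (a * (a - (k.+1)%:R)) - t * ((k.+1)%:R - t).

Lemma Gp_F : Gp F.
Proof. exact: (Gp_GI (GIF [::])). Qed.

Lemma chainD (a c : R) (L U E : vec -> R) (ts : seq R) :
  Gp L -> Gp E ->
  (forall x, Om x -> U x = rho x `^ a * (c * L x + rho x * E x)) ->
  exists E', Gp E' /\ forall x, Om x ->
    Dprod ts U x = rho x `^ a * (c * \prod_(t <- ts) kap a t * L x + rho x * E' x).
Proof.
move=> GL GE eU; elim: ts => [|t ts [E1 [G1 e1]]].
  exists E; split => // x Ox; by rewrite big_nil mulr1 /= eU.
have GE1 : Gp (fun y => c * \prod_(t <- ts) kap a t * L y + rho y * E1 y).
  apply: Gp_add; first by apply: Gp_mul => //; exact: Gp_c.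
  by apply: Gp_mul => //; exact: Gp_rho.
have [E2 [G2 e2]] := step t GE1 e1.
exists (fun y => kap a t * E1 y + E2 y); split.
  by apply: Gp_add => //; apply: Gp_mul => //; exact: Gp_c.
move=> x Ox.
rewrite [Dprod _ _]/= -/(Dprod ts U) e2 // big_cons /kap; ring.
Qed.

Lemma rho_ray (th : vec) : on_sphere th ->
  (fun r : R => rho (r *: th)) @ (1:R)^'- --> (0:R).
Proof.
move=> sth.
apply: (cvg_trans (near_eq_cvg _)); last first.
  apply: cvg_at_left_filter.
  have H1 : (fun r : R => 2 * (1 - r)) @ (1:R) --> (2 * (1 - 1) : R).
    have Hb : (fun r : R => 1 - r) @ (1:R) --> (1 - 1 : R).
      by apply: cvgB; [exact: cvg_cst | exact: cvg_id].
    by apply: cvgM; [exact: cvg_cst | exact: Hb].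
  have h2 : (1 + 1 : R) != 0 by rewrite gt_eqF // addr_gt0.
  have H2 : (fun r : R => (1 + r)^-1) @ (1:R) --> ((1 + 1)^-1 : R).
    have Hb : (fun r : R => 1 + r) @ (1:R) --> (1 + 1 : R).
      by apply: cvgD; [exact: cvg_cst | exact: cvg_id].
    by apply: cvgV.
  have H := cvgM H1 H2.
  rewrite subrr mulr0 mul0r in H.
  exact: H.
near=> r.
have rp : 0 < r by near: r; exact: near_left_pos.
by rewrite /= /rho enormZ sth mulr1 gtr0_norm.
Unshelve. all: by end_near. Qed.

Lemma final_lim (W L E : vec -> R) (c : R) (th : vec) : on_sphere th -> Gp E ->
  (forall r : R, 0 < r -> L (r *: th) = L th) ->
  (forall x, Om x -> W x = c * L x + rho x * E x) ->
  bdry W th (c * L th).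
Proof.
move=> sth GE hL eW.
have [l Hl] := Gp_ray GE sth.
have H : (fun r : R => c * L th + rho (r *: th) * E (r *: th)) @ (1:R)^'- --> c * L th + 0 * l.
  apply: cvgD; first exact: cvg_cst.
  by apply: cvgM; [exact: rho_ray | exact: Hl].
rewrite mul0r addr0 in H.
apply: (cvg_trans (near_eq_cvg _) H).
near=> r.
have rp : 0 < r by near: r; exact: near_left_pos.
have r1 : r < 1 by near: r; exact: nbhs_left_lt.
rewrite /= eW ?hL //.
by apply/andP; split; rewrite enormZ sth mulr1 gtr0_norm.
Unshelve. all: by end_near. Qed.

Definition Bun (e s : R) (ts : seq R) (U : vec -> R) : vec -> R :=
  fun x => rho x `^ e * Dprod ts (fun y => rho y `^ s * U y) x.

Lemma Bun_lim (K e s p c : R) (ts : seq R) (U L E : vec -> R) (th : vec) :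
  on_sphere th -> Gp L -> Gp E -> e + (s + p) = 0 ->
  (forall r : R, 0 < r -> L (r *: th) = L th) ->
  (forall x, Om x -> U x = rho x `^ p * (c * L x + rho x * E x)) ->
  bdry (fun x => K * Bun e s ts U x) th (K * c * \prod_(t <- ts) kap (s + p) t * L th).
Proof.
move=> sth GL GE esp hL eU.
have eU' : forall x, Om x -> rho x `^ s * U x = rho x `^ (s + p) * (c * L x + rho x * E x).
  move=> x Ox; rewrite eU // powRD ?mulrA //.
  by apply/implyP => _; rewrite gt_eqF // Om_rho.
have [E' [G' e']] := chainD ts GL GE eU'.
apply: (final_lim (E := fun y => K * E' y) sth _ hL).
  by apply: Gp_mul => //; exact: Gp_c.
move=> x Ox; rewrite /Bun e' //.
rewrite [rho x `^ e * _]mulrA -powRD; last first.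
  by apply/implyP => _; rewrite gt_eqF // Om_rho.
rewrite esp powRr0; ring.
Qed.

Lemma Bun_val (e s p c : R) (ts : seq R) (U L E : vec -> R) (th : vec) :
  on_sphere th -> Gp L -> Gp E -> e + (s + p) = 0 ->
  (forall r : R, 0 < r -> L (r *: th) = L th) ->
  (forall x, Om x -> U x = rho x `^ p * (c * L x + rho x * E x)) ->
  lim ((fun r : R => Bun e s ts U (r *: th)) @ (1:R)^'-) = c * \prod_(t <- ts) kap (s + p) t * L th.
Proof.
move=> sth GL GE esp hL eU.
have H := Bun_lim (K:=1) (ts:=ts) sth GL GE esp hL eU.
rewrite (_ : (fun x => 1 * Bun e s ts U x) = Bun e s ts U) in H; last first.
  by apply/funext => x; rewrite mul1r.
rewrite /bdry mul1r in H.
exact: cvg_lim H.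
Qed.
End S4.

Section Arith.
Variable R : realType.

Lemma flo_facts (g : R) : 0 < g ->
  (2 * flo (g / 2) <= flo g)%N /\ (flo g <= 2 * flo (g / 2) + 1)%N.
Proof.
move=> g0.
have g20 : 0 <= g / 2 by rewrite divr_ge0 // ltW.
have /andP[h1 h2] := truncn_itv g20.
rewrite /flo; split.
  rewrite truncn_ge_nat; last exact: ltW.
  rewrite natrM.
  move: h1; set q := (Num.truncn (g / 2))%:R; lra.
rewrite truncn_le_nat (_ : (2 * Num.truncn (g / 2) + 1).+1 = 2 * (Num.truncn (g / 2)).+1)%N; last lia.
rewrite natrM.
move: h2; set q := ((Num.truncn (g / 2)).+1)%:R; lra.
Qed.

Lemma kap_even (k j l : nat) (g : R) :
  kap k ((k.+1)%:R / 2 - g + 2 * j%:R) (sp k.+1 g - 2 * l%:R) =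
  -4 * ((j + l)%:R - g) * (j%:R - l%:R).
Proof. rewrite /kap /sp natrD; field; by rewrite ?pnatr_eq0. Qed.

Lemma kap_odd (k j l : nat) (g : R) :
  kap k ((k.+1)%:R / 2 - g + (2 * j%:R + 2 * fracp g)) (sp k.+1 g - 2 * l%:R) =
  -4 * ((j + l)%:R - (flo g)%:R) * (g + j%:R - (flo g)%:R - l%:R).
Proof. rewrite /kap /sp /fracp natrD; field; by rewrite ?pnatr_eq0. Qed.

Lemma prod_even (k j : nat) (g : R) : 0 < g -> (forall q : nat, g <> q%:R) ->
  (j <= flo (g / 2))%N ->
  \prod_(t <- ts_even k.+1 g j) kap k ((k.+1)%:R / 2 - g + 2 * j%:R) t != 0.
Proof.
move=> g0 gn hj.
have [f1 f2] := flo_facts g0.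
rewrite prodf_seq_neq0; apply/allP => t.
rewrite /ts_even mem_cat => /orP[] /mapP[l]; rewrite mem_iota => hl -> /=;
  rewrite kap_even !mulf_neq0 //; try (by rewrite oppr_eq0);
  try (by rewrite subr_eq0; apply/eqP => h; apply: (gn (j + l)%N); rewrite h);
  rewrite subr_eq0 eqr_nat; apply/eqP => e; subst l; lia.
Qed.

Lemma prod_odd (k j : nat) (g : R) : 0 < g -> (forall q : nat, g <> q%:R) ->
  (j.+1 + flo (g / 2) <= flo g)%N ->
  \prod_(t <- ts_odd k.+1 g j) kap k ((k.+1)%:R / 2 - g + (2 * j%:R + 2 * fracp g)) t != 0.
Proof.
move=> g0 gn hj.
have [f1 f2] := flo_facts g0.
have nz2 : forall l : nat, g + j%:R - (flo g)%:R - l%:R != 0.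
  move=> l; apply/eqP => h.
  have e : g = (flo g + l)%:R - j%:R.
    by apply/eqP; rewrite -subr_eq0 -h natrD; apply/eqP; ring.
  case: (leqP j (flo g + l)) => hjl.
    by apply: (gn (flo g + l - j)%N); rewrite [in LHS]e natrB.
  have : (flo g + l)%:R - j%:R < (0:R) by rewrite subr_lt0 ltr_nat.
  rewrite -e => h'; lra.
rewrite prodf_seq_neq0; apply/allP => t.
rewrite /ts_odd mem_cat => /orP[] /mapP[l]; rewrite mem_iota => hl -> /=;
  rewrite kap_odd !mulf_neq0 //; try (by rewrite oppr_eq0);
  rewrite subr_eq0 eqr_nat; apply/eqP => e; lia.
Qed.

Lemma th0_sphere (k : nat) : on_sphere (th0 R k.+1).
Proof.
rewrite /on_sphere /enorm /th0.
rewrite (eq_bigr (fun i : 'I_(k.+2) => (i == ord0)%:R)); last first.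
  by move=> i _; rewrite ebasisE; case: (i == ord0); rewrite ?expr1n ?expr0n.
by rewrite (bigD1 ord0) //= ?eqxx big1 ?addr0 ?sqrtr1 // => i /negbTE ->.
Qed.

End Arith.
Unset Implicit Arguments.

Theorem lemma4p5 (R : realType) (n : nat) (g : R) (f : 'rV[R]_(n.+1) -> R) (m : nat) :
  (1 <= n)%N -> 0 < g -> (forall k : nat, g <> k%:R) ->
  smooth_on (fun x : 'rV[R]_(n.+1) => x <> 0) (radial f) ->
  (0 < m)%N ->
  (forall j : nat, (j <= flo (g / 2))%N ->
     forall th : 'rV[R]_(n.+1), on_sphere th ->
       bdry (Beven g j (fun x => rho x `^ (2 * j%:R) * radial f x)) th (f th) /\
       bdry (Beven g j (fun x => rho x `^ (2 * j%:R + 2 * m%:R) * radial f x)) th 0) /\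
  (forall j : nat, (j.+1 + flo (g / 2) <= flo g)%N ->
     forall th : 'rV[R]_(n.+1), on_sphere th ->
       bdry (Bodd g j (fun x => rho x `^ (2 * j%:R + 2 * fracp g) * radial f x)) th (f th) /\
       bdry (Bodd g j (fun x => rho x `^ (2 * j%:R + 2 * fracp g + 2 * m%:R) * radial f x)) th 0).
Proof.
case: n f => [//|k] f _ g0 gn hf m0.
have hom : forall (c : R) (y : 'rV[R]_(k.+2)), 0 < c -> radial f (c *: y) = radial f y.
  move=> c y c0; rewrite /radial enormZ gtr0_norm // scalerA invfM mulrAC mulVf ?gt_eqF //.
  by rewrite mul1r.
have Fth : forall th : 'rV[R]_(k.+2), on_sphere th -> radial f th = f th.
  by move=> th sth; rewrite /radial sth invr1 scale1r.
have hL : forall th : 'rV[R]_(k.+2), forall r : R, 0 < r -> radial f (r *: th) = radial f th.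
  by move=> th r r0; exact: hom.
have hL1 : forall th : 'rV[R]_(k.+2), forall r : R, 0 < r ->
    (fun _ : 'rV[R]_(k.+2) => (1:R)) (r *: th) = (fun _ => 1) th by [].
have G0 := Gp_c (radial f) 0.
have G1 := Gp_c (radial f) 1.
have GF := Gp_F (radial f).
have GEm : Gp (radial f) (fun y => rho y ^+ (2 * m).-1 * radial f y).
  by apply: Gp_mul => //; apply: Gp_exp; exact: Gp_rho.
have sh2 : forall (p : R) (x : 'rV[R]_(k.+2)), Om x ->
    rho x `^ (p + 2 * m%:R) * radial f x =
    rho x `^ p * (0 * radial f x + rho x * (rho x ^+ (2 * m).-1 * radial f x)).
  move=> p x Ox; have rp := Om_rho Ox.
  rewrite powRD; last by apply/implyP => _; rewrite gt_eqF.
  rewrite -natrM powR_mulrn ?ltW //.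
  have e : rho x ^+ (2 * m) = rho x * rho x ^+ (2 * m).-1.
    by rewrite -exprS prednK // muln_gt0.
  rewrite e; ring.
split.
- move=> j hj th sth.
  case: (eqVneq j 0%N) => [->|j0].
    rewrite /Beven eqxx; split.
      rewrite -Fth // -[radial f th]mul1r.
      apply: (final_lim hf hom (c:=1) (L:=radial f) (E:=fun _ => 0) sth G0 (hL th)).
      by move=> x Ox; rewrite mulr0 powRr0; ring.
    rewrite -(mul0r (radial f th)).
    apply: (final_lim hf hom (c:=0) (L:=radial f) (E:=fun y => rho y ^+ (2 * m).-1 * radial f y) sth GEm (hL th)).
    move=> x Ox; rewrite (_ : 2 * 0%:R = 0 :> R) ?mulr0 //.
    by rewrite -[0 + _]/(0 + 2 * m%:R) sh2 // powRr0 mul1r.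
  have C0 := prod_even k g0 gn hj.
  have esp : (- ((k.+1)%:R / 2) + g - 2 * j%:R) + ((k.+1)%:R / 2 - g + 2 * j%:R) = 0 :> R.
    by ring.
  have hb : b_even k.+1 g j = 1 * \prod_(t <- ts_even k.+1 g j) kap k ((k.+1)%:R / 2 - g + 2 * j%:R) t * 1.
    rewrite /b_even.
    apply: (Bun_val hf hom (e := - ((k.+1)%:R / 2) + g - 2 * j%:R) (s := (k.+1)%:R / 2 - g)
       (p := 2 * j%:R) (c := 1) (L := fun _ => 1) (E := fun _ => 0)
       (ts_even k.+1 g j) (th0_sphere R k) G1 G0 esp (hL1 (th0 R k.+1))).
    by move=> x Ox; rewrite mulr0 addr0 !mulr1.
  rewrite /Beven (negbTE j0); split.
    rewrite -Fth //.
    rewrite (_ : radial f th = (b_even k.+1 g j)^-1 * 1 *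
        \prod_(t <- ts_even k.+1 g j) kap k ((k.+1)%:R / 2 - g + 2 * j%:R) t * radial f th);
      last by rewrite hb; field; rewrite C0.
    apply: (Bun_lim hf hom (K := (b_even k.+1 g j)^-1) (c := 1) (L := radial f) (E := fun _ => 0)
       sth GF G0 esp (hL th)).
    by move=> x Ox; rewrite mulr0 addr0 mul1r.
  rewrite (_ : 0 = (b_even k.+1 g j)^-1 * 0 *
        \prod_(t <- ts_even k.+1 g j) kap k ((k.+1)%:R / 2 - g + 2 * j%:R) t * radial f th);
    last by rewrite mulr0 !mul0r.
  apply: (Bun_lim hf hom (K := (b_even k.+1 g j)^-1) (c := 0) (L := radial f)
     (E := fun y => rho y ^+ (2 * m).-1 * radial f y) sth GF GEm esp (hL th)).
  by move=> x Ox; exact: sh2.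
- move=> j hj th sth.
  have C0 := prod_odd k g0 gn hj.
  have esp : (- ((k.+1)%:R / 2) + g - 2 * j%:R - 2 * fracp g) +
      ((k.+1)%:R / 2 - g + (2 * j%:R + 2 * fracp g)) = 0 :> R.
    by ring.
  have hb : b_odd k.+1 g j = - (1 * \prod_(t <- ts_odd k.+1 g j)
      kap k ((k.+1)%:R / 2 - g + (2 * j%:R + 2 * fracp g)) t * 1).
    rewrite /b_odd; congr (- _).
    apply: (Bun_val hf hom (e := - ((k.+1)%:R / 2) + g - 2 * j%:R - 2 * fracp g) (s := (k.+1)%:R / 2 - g)
       (p := 2 * j%:R + 2 * fracp g) (c := 1) (L := fun _ => 1) (E := fun _ => 0)
       (ts_odd k.+1 g j) (th0_sphere R k) G1 G0 esp (hL1 (th0 R k.+1))).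
    by move=> x Ox; rewrite mulr0 addr0 !mulr1.
  rewrite /Bodd; split.
    rewrite -Fth //.
    rewrite (_ : radial f th = - (b_odd k.+1 g j)^-1 * 1 *
        \prod_(t <- ts_odd k.+1 g j) kap k ((k.+1)%:R / 2 - g + (2 * j%:R + 2 * fracp g)) t * radial f th);
      last by rewrite hb; field; rewrite C0.
    apply: (Bun_lim hf hom (K := - (b_odd k.+1 g j)^-1) (c := 1) (L := radial f) (E := fun _ => 0)
       sth GF G0 esp (hL th)).
    by move=> x Ox; rewrite mulr0 addr0 mul1r.
  rewrite (_ : 0 = - (b_odd k.+1 g j)^-1 * 0 *
        \prod_(t <- ts_odd k.+1 g j) kap k ((k.+1)%:R / 2 - g + (2 * j%:R + 2 * fracp g)) t * radial f th);
    last by rewrite mulr0 !mul0r.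
  apply: (Bun_lim hf hom (K := - (b_odd k.+1 g j)^-1) (c := 0) (L := radial f)
     (E := fun y => rho y ^+ (2 * m).-1 * radial f y) sth GF GEm esp (hL th)).
  by move=> x Ox; exact: sh2.
Qed.
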